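(* Let $\phi$ be an instance of \textsc{Max (2,3)-SAT} with $n$ variables and let $T_\phi$ be the tournament instance constructed from $\phi$ as described in the context. If $T_\phi$ has a seeding whose tournament value is at least $k'$, then $\phi$ admits an assignment that satisfies at least $k'-n$ clauses.
   Context: Tournament model: players form a finite set of size $2^{n'}$ totally ordered by strength (stronger beats weaker). A seeding is a bijection $\sigma$ from players to $[2^{n'}]$. In round $r=1,\dots,n'$, for each block of seed positions $\{(k-1)2^r+1,\dots,k2^r\}$, the winner $a$ of its first half $\{(k-1)2^r+1,\dots,(k-1)2^r+2^{r-1}\}$ plays the winner $b$ of its second half (a single-position block is won by the player seeded there), the stronger one wins the block, and the game has value $v(a,b,r)$. The tournament value is the sum of values of all games played. \textsc{Max (2,3)-SAT} instance: a CNF formula $\phi$ with variables $x_1,\dots,x_n$ and clauses $c_1,\dots,c_m$, each clause having exactly two literals and each variable appearing in at most three clauses; the occurrences of each variable $x$ as a literal are numbered $1,2,3$ (its $j$th appearance) in a fixed order. Construction of $T_\phi$: let $n'$ be the smallest integer with $16n\le 2^{n'}$ and $p=2^{n'}-16n$. Players: for each variable $x$, three variable players $x,x^T,x^F$; for each clause $c$, one clause player $c$; and dummy players $f_1,\dots,f_{13n+p-m}$. Strength order (strongest first): $x_1>x_1^T>x_1^F>x_2>x_2^T>x_2^F>\dots>x_n>x_n^T>x_n^F>c_1>\dots>c_m>f_1>\dots>f_{13n+p-m}$. Game values: for each variable $x$, $v(x,x^T,1)=v(x^T,x,1)=v(x,x^F,1)=v(x^F,x,1)=1$; for each clause $c$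 and each literal of $c$ that is the $j$th appearance of variable $x$, if $x$ appears non-negated there set $v(c,x^T,j)=v(x^T,c,j)=1$, and otherwise set $v(c,x^F,j)=v(x^F,c,j)=1$; all other values $v(a,b,r)$ for $r\in[n']$ are $0$. *)

(* Defs.v *)
From mathcomp Require Import all_boot all_fingroup.
Set Implicit Arguments. Unset Strict Implicit. Unset Printing Implicit Defensive.

(* ---------- General tournament model ----------
   Players are the elements of 'I_(2^N'); strength is the index order:
   a smaller index means a STRONGER player (index 0 is the strongest).
   A seeding is a permutation s : player -> seed position, positions being
   0-based (position i here = seed i+1 in the paper). *)

Lemma pow2_gt0 (N : nat) : 0 < 2 ^ N.
Proof. by rewrite expn_gt0. Qed.

Definition ord_dflt (N : nat) : 'I_(2 ^ N) := Ordinal (pow2_gt0 N).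

Definition stronger (N : nat) (a b : 'I_(2 ^ N)) : 'I_(2 ^ N) :=
  if val a <= val b then a else b.

Definition player_at (N : nat) (s : {perm 'I_(2 ^ N)}) (i : nat) : 'I_(2 ^ N) :=
  (s^-1)%g (insubd (ord_dflt N) i).

(* winner s r k = winner of the k-th block (0-based) of 2^r consecutive
   seed positions {k 2^r, ..., (k+1) 2^r - 1}. *)
Fixpoint winner (N : nat) (s : {perm 'I_(2 ^ N)}) (r k : nat) : 'I_(2 ^ N) :=
  match r with
  | 0 => player_at s k
  | r'.+1 => stronger (winner s r' k.*2) (winner s r' k.*2.+1)
  end.

Definition tvalue (N : nat) (v : 'I_(2 ^ N) -> 'I_(2 ^ N) -> nat -> nat)
    (s : {perm 'I_(2 ^ N)}) : nat :=
  \sum_(1 <= r < N.+1) \sum_(k < 2 ^ (N - r))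
     v (winner s r.-1 k.*2) (winner s r.-1 k.*2.+1) r.

Lemma ex_pow2_ge (n : nat) : exists e, 16 * n <= 2 ^ e.
Proof. exists (16 * n); exact: ltnW (ltn_expl _ (ltnSn 1)). Qed.

Definition Tn' (n : nat) : nat := ex_minn (ex_pow2_ge n).

(* Player indices (0-based, listed in strength order):
   variable i (0 <= i < n): x_i = 3i, x_i^T = 3i+1, x_i^F = 3i+2;
   clause c (0 <= c < m): 3n + c;
   dummies: all remaining indices 3n+m, ..., 2^n' - 1
   (there are exactly 13n + p - m of them). *)
Definition var_pl (i : nat) : nat := 3 * i.
Definition T_pl (i : nat) : nat := 3 * i + 1.
Definition F_pl (i : nat) : nat := 3 * i + 2.
Definition cl_pl (n c : nat) : nat := 3 * n + c.

(* literal = (variable, polarity); polarity true = non-negated *)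
Definition lit_pl (n : nat) (l : 'I_n * bool) : nat :=
  if l.2 then T_pl l.1 else F_pl l.1.

(* Game values of T_phi. cl c l = l-th literal (l in {0,1}) of clause c,
   occ c l = its appearance number j in {1,2,3} for its variable. *)
Definition Tphi_val (n m : nat) (cl : 'I_m -> 'I_2 -> 'I_n * bool)
    (occ : 'I_m -> 'I_2 -> nat) (a b r : nat) : nat :=
  [&& 1 <= r, r <= Tn' n &
    ((r == 1) &&
      [exists i : 'I_n,
         ((a == var_pl i) && ((b == T_pl i) || (b == F_pl i))) ||
         ((b == var_pl i) && ((a == T_pl i) || (a == F_pl i)))])
    || [exists c : 'I_m, exists l : 'I_2,
         (r == occ c l) &&
         (((a == cl_pl n c) && (b == lit_pl (cl c l))) ||
          ((b == cl_pl n c) && (a == lit_pl (cl c l))))]].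

Definition Tphi_v (n m : nat) (cl : 'I_m -> 'I_2 -> 'I_n * bool)
    (occ : 'I_m -> 'I_2 -> nat) :
    'I_(2 ^ Tn' n) -> 'I_(2 ^ Tn' n) -> nat -> nat :=
  fun a b r => Tphi_val cl occ (val a) (val b) r.

Definition n_occ (n m : nat) (cl : 'I_m -> 'I_2 -> 'I_n * bool) (x : 'I_n) : nat :=
  #|[set p : 'I_m * 'I_2 | (cl p.1 p.2).1 == x]|.

Definition sat_clause (n m : nat) (cl : 'I_m -> 'I_2 -> 'I_n * bool)
    (a : 'I_n -> bool) (c : 'I_m) : bool :=
  [exists l : 'I_2, a (cl c l).1 == (cl c l).2].

(* Main.v *)
Require Import Defs.
From mathcomp Require Import all_boot all_fingroup.
From mathcomp Require Import zify.
Set Implicit Arguments. Unset Strict Implicit. Unset Printing Implicit Defensive.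

Section Tour.
Variable N : nat.
Variable s : {perm 'I_(2 ^ N)}.
Definition pos (q : 'I_(2^N)) : nat := val (s q).

Lemma stronger_or (a b : 'I_(2^N)) : stronger a b = a \/ stronger a b = b.
Proof. rewrite /stronger; case: ifP; by [left|right]. Qed.

Lemma exp2S r : 2 ^ r.+1 = 2 * 2 ^ r.
Proof. by rewrite expnS. Qed.

Lemma subSn' a b : b < a -> a - b = (a - b.+1).+1.
Proof. lia. Qed.

Lemma posW r k : r <= N -> k < 2 ^ (N - r) -> pos (winner s r k) %/ 2 ^ r = k.
Proof.
elim: r k => [|r IH] k hr hk /=.
  rewrite /pos /player_at permKV val_insubd expn0 divn1.
  by rewrite subn0 in hk; rewrite hk.
have hk2 : k.*2.+1 < 2 ^ (N - r).
  rewrite (subSn' hr) exp2S; lia.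
have hk1 : k.*2 < 2 ^ (N - r) by lia.
rewrite expnSr divnMA.
case: (stronger_or (winner s r k.*2) (winner s r k.*2.+1)) => ->.
  rewrite IH //; [lia|lia].
rewrite IH //; [lia|lia].
Qed.

Lemma W_down r' r j : r <= r' -> r' <= N -> j < 2 ^ (N - r') ->
  winner s r' j = winner s r (pos (winner s r' j) %/ 2 ^ r).
Proof.
elim: r' j => [|r' IH] j hr hr' hj.
  have -> : r = 0 by lia.
  by rewrite expn0 divn1 /= /pos /player_at permKV val_insubd; rewrite subn0 in hj; rewrite hj.
case: (ltnP r r'.+1) => hrr; last first.
  have -> : r = r'.+1 by lia. by rewrite posW.
have hk2 : j.*2.+1 < 2 ^ (N - r').
  rewrite (subSn' hr') exp2S; lia.
rewrite [in RHS]/=.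
case: (stronger_or (winner s r' j.*2) (winner s r' j.*2.+1)) => /= ->.
  rewrite -IH //; lia.
rewrite -IH //; lia.
Qed.

Definition part r k q := (q == winner s r.-1 k.*2) || (q == winner s r.-1 k.*2.+1).

Lemma part_pos r k q : 1 <= r <= N -> k < 2 ^ (N - r) -> part r k q -> pos q %/ 2 ^ r = k.
Proof.
case: r => [|r] // hr0 hk.
have hr : r < N by case/andP: hr0.
have hk2 : k.*2.+1 < 2 ^ (N - r).
  rewrite (subSn' hr) exp2S; lia.
rewrite expnSr divnMA.
by case/orP=> /eqP ->; rewrite posW //=; lia.
Qed.

Lemma part_uniq r k1 k2 q : 1 <= r <= N -> k1 < 2 ^ (N - r) -> k2 < 2 ^ (N - r) ->
  part r k1 q -> part r k2 q -> k1 = k2.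
Proof. move=> hr h1 h2 p1 p2; by rewrite -(part_pos hr h1 p1) (part_pos hr h2 p2). Qed.

Lemma loser r1 k1 r2 k2 q : 1 <= r1 -> r1 < r2 -> r2 <= N -> k1 < 2 ^ (N - r1) ->
  k2 < 2 ^ (N - r2) -> part r1 k1 q -> q != winner s r1 k1 -> part r2 k2 q -> False.
Proof.
move=> h1 h12 h2 hk1 hk2 p1 nw p2.
have hp := part_pos (_ : 1 <= r1 <= N) hk1 p1.
case: r2 h12 h2 hk2 p2 => [|r2] // h12 h2 hk2 p2.
have hj : k2.*2.+1 < 2 ^ (N - r2).
  rewrite (subSn' h2) exp2S; lia.
have e : q = winner s r1 (pos q %/ 2 ^ r1).
  case/orP: p2 => /eqP e /=; rewrite {1}e; rewrite (@W_down r2 r1) //= -?e //; lia.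
rewrite hp in e; last by apply/andP; split; lia.
by rewrite -e eqxx in nw.
Qed.

Lemma lose_game r k (a b : 'I_(2^N)) : a = winner s r k.*2 -> b = winner s r k.*2.+1 ->
   val a < val b -> b != winner s r.+1 k.
Proof.
move=> -> -> h /=; rewrite /stronger ifT; last by apply: ltnW.
apply/eqP => e; move: h; rewrite -e; lia.
Qed.

Lemma lose_game2 r k (a b : 'I_(2^N)) : a = winner s r k.*2 -> b = winner s r k.*2.+1 ->
   val b < val a -> a != winner s r.+1 k.
Proof.
move=> -> -> h /=; rewrite /stronger ifF; last by apply/negbTE; rewrite -ltnNge.
apply/eqP => e; move: h; rewrite -e; lia.
Qed.
End Tour.

Section Main.
Variables (n m : nat) (cl : 'I_m -> 'I_2 -> 'I_n * bool) (occ : 'I_m -> 'I_2 -> nat).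
Variable s : {perm 'I_(2 ^ Tn' n)}.
Local Notation N := (Tn' n).
Definition gT := ('I_N.+1 * 'I_(2 ^ N))%type.
Definition pa (g : gT) := winner s (g.1).-1 (g.2).*2.
Definition pb (g : gT) := winner s (g.1).-1 (g.2).*2.+1.
Definition valid (g : gT) := (1 <= g.1) && (g.2 < 2 ^ (N - g.1)).
Definition Gset := [set g : gT | valid g && (0 < Tphi_val cl occ (pa g) (pb g) g.1)].

Lemma tvalue_card : tvalue (Tphi_v cl occ) s = #|Gset|.
Proof.
rewrite -sum1_card big_mkcond /=.
have -> : \sum_(i : gT) (if i \in Gset then 1 else 0) = \sum_(r : 'I_N.+1) \sum_(k : 'I_(2^N)) (if (r,k) \in Gset then 1 else 0).
  by rewrite pair_bigA; apply: eq_bigr => -[r k].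
rewrite big_ord_recl /= big1; last first.
  by move=> k _; rewrite inE /valid /=.
rewrite add0n /tvalue big_add1 /= big_mkord; apply: eq_bigr => r _.
rewrite (big_ord_widen (2 ^ N) (fun k => Tphi_v cl occ (winner s r k.*2) (winner s r k.*2.+1) r.+1)); last first.
  by apply: leq_pexp2l => //; apply: leq_subr.
rewrite big_mkcond /=.
apply: eq_bigr => k _; rewrite inE /valid /=.
rewrite /bump /= add1n /pa /pb /= add0n.
case: (k < 2 ^ (N - r.+1)) => //=.
by rewrite /Tphi_v /Tphi_val; case: [&& _, _ & _].
Qed.
End Main.

Section Main2.
Variables (n m : nat) (cl : 'I_m -> 'I_2 -> 'I_n * bool) (occ : 'I_m -> 'I_2 -> nat).
Variable s : {perm 'I_(2 ^ Tn' n)}.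
Local Notation N := (Tn' n).
Local Notation Gset := (Gset cl occ s).
Local Notation pa := (pa s).
Local Notation pb := (pb s).

Definition plays (g : gT n) x := (val (pa g) == x) || (val (pb g) == x).

Lemma Gset_valid g : g \in Gset -> 1 <= g.1 <= N /\ g.2 < 2 ^ (N - g.1).
Proof.
rewrite inE /valid => /andP[/andP[h1 h2] _]; split => //.
by rewrite h1 -ltnS ltn_ord.
Qed.

Lemma plays_part g (q : 'I_(2 ^ N)) : plays g (val q) = part s g.1 g.2 q.
Proof. by rewrite /plays /part /pa /pb !val_eqE ![_ == q]eq_sym. Qed.

Lemma plays_ex g x : plays g x -> exists q : 'I_(2 ^ N), val q = x /\ ((q = pa g) \/ (q = pb g)).
Proof.
by case/orP => /eqP <-; [exists (pa g) | exists (pb g)]; split => //; [left|right].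
Qed.

Lemma same_game g1 g2 x : g1 \in Gset -> g2 \in Gset -> g1.1 = g2.1 :> nat ->
  plays g1 x -> plays g2 x -> g1 = g2.
Proof.
move=> G1 G2 er p1 p2.
have [q [qx _]] := plays_ex p1.
move: p1 p2; rewrite -qx !plays_part => p1 p2.
have [v1 k1] := Gset_valid G1; have [v2 k2] := Gset_valid G2.
rewrite -er in p2 k2.
have ek := part_uniq v1 k1 k2 p1 p2.
case: g1 g2 er ek {G1 G2 v1 v2 k1 k2 p1 p2} => [r1 c1] [r2 c2] /= er ek.
by congr pair; apply: val_inj.
Qed.

Lemma loser_game g1 g2 x y : g1 \in Gset -> g2 \in Gset -> g1.1 < g2.1 ->
  plays g1 x -> plays g1 y -> y < x -> plays g2 x -> False.
Proof.
move=> G1 G2 lt p1 q1 yx p2.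
have [v1 k1] := Gset_valid G1; have [v2 k2] := Gset_valid G2.
case/andP: v1 => r1 _.
case/andP: v2 => _ r2.
have key : forall q : 'I_(2 ^ N), val q = x -> q != winner s g1.1 g1.2 -> False.
  move=> q qx nw.
  have pq1 : part s g1.1 g1.2 q by rewrite -plays_part qx.
  have pq2 : part s g2.1 g2.2 q by rewrite -plays_part qx.
  exact: (@loser _ s g1.1 g1.2 g2.1 g2.2 q r1 lt r2 k1 k2 pq1 nw pq2).
case E: (nat_of_ord g1.1) r1 => [|r] // _.
have ea : pa g1 = winner s r g1.2.*2 by rewrite /pa E.
have eb : pb g1 = winner s r g1.2.*2.+1 by rewrite /pb E.
have ew : winner s g1.1 g1.2 = winner s r.+1 g1.2 by rewrite E.
case/orP: p1 => /eqP ex; case/orP: q1 => /eqP ey.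
- lia.
- apply: (key (pa g1) ex); rewrite ew.
  apply: (@lose_game2 _ _ r _ (pa g1) (pb g1) ea eb); lia.
- apply: (key (pb g1) ex); rewrite ew.
  apply: (@lose_game _ _ r _ (pa g1) (pb g1) ea eb); lia.
- lia.
Qed.
End Main2.

Section Main3.
Variables (n m : nat) (cl : 'I_m -> 'I_2 -> 'I_n * bool) (occ : 'I_m -> 'I_2 -> nat).
Hypothesis Hthree : forall x : 'I_n, n_occ cl x <= 3.
Hypothesis Hocc_range : forall (c : 'I_m) (l : 'I_2), 1 <= occ c l <= n_occ cl (cl c l).1.
Hypothesis Hocc_inj : forall (c c' : 'I_m) (l l' : 'I_2),
        (cl c l).1 = (cl c' l').1 -> occ c l = occ c' l' -> (c, l) = (c', l').
Variable s : {perm 'I_(2 ^ Tn' n)}.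
Local Notation N := (Tn' n).
Local Notation Gset := (Gset cl occ s).
Local Notation pa := (pa s).
Local Notation pb := (pb s).
Local Notation plays := (plays s).

Definition VGc (g : gT n) (i : 'I_n) :=
  (g.1 == 1 :> nat) && plays g (var_pl i) && (plays g (T_pl i) || plays g (F_pl i)).
Definition GCc (g : gT n) (p : 'I_m * 'I_2) :=
  (g.1 == occ p.1 p.2 :> nat) && plays g (cl_pl n p.1) && plays g (lit_pl (cl p.1 p.2)).

Lemma lit_lt (l : 'I_n * bool) : lit_pl l < 3 * n.
Proof. case: l => [i []]; rewrite /lit_pl /T_pl /F_pl /=; have := ltn_ord i; lia. Qed.

Lemma three_players g a b c : plays g a -> plays g b -> plays g c ->
  a = b \/ a = c \/ b = c.
Proof. by rewrite /plays => /orP[] /eqP <- /orP[] /eqP <- /orP[] /eqP <-; tauto. Qed.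

Lemma Gset_cases (g : gT n) : g \in Gset -> (exists i, VGc g i) \/ (exists p, GCc g p).
Proof.
rewrite inE => /andP[_]; rewrite /Tphi_val lt0b.
case/and3P=> [_ _] /orP[].
  case/andP=> r1 /existsP[i hi]; left; exists i.
  rewrite /VGc r1 /plays /=.
  by case/orP: hi => /andP[-> /orP[] ->]; rewrite ?orbT.
case/existsP=> c /existsP[l /andP[ro hl]]; right; exists (c, l).
rewrite /GCc /plays /= ro /=.
by case/orP: hl => /andP[-> ->]; rewrite ?orbT.
Qed.

Lemma GC_round g p : GCc g p -> 1 <= g.1 <= 3.
Proof.
case/andP=> /andP[/eqP -> _] _.
have := Hocc_range p.1 p.2; have := Hthree (cl p.1 p.2).1; lia.
Qed.

Lemma clause_uniq (g1 g2 : gT n) p1 p2 : g1 \in Gset -> g2 \in Gset -> GCc g1 p1 -> GCc g2 p2 ->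
  p1.1 = p2.1 -> g1 = g2.
Proof.
move=> G1 G2 h1 h2 e.
move: (h1) (h2) => /andP[/andP[_ c1] l1] /andP[/andP[_ c2] l2].
rewrite e in c1.
have lt1 := lit_lt (cl p1.1 p1.2); have lt2 := lit_lt (cl p2.1 p2.2).
case: (ltngtP g1.1 g2.1) => hr.
- case: (loser_game G1 G2 hr c1 l1 _ c2) => //; rewrite /cl_pl.
  by apply: leq_trans lt1 _; apply: leq_addr.
- case: (loser_game G2 G1 hr c2 l2 _ c1) => //; rewrite /cl_pl.
  by apply: leq_trans lt2 _; apply: leq_addr.
- exact: (same_game G1 G2 (val_inj _) c1 c2) || exact: (same_game G1 G2 hr c1 c2).
Qed.

Lemma round_eq (g1 g2 : gT n) p1 p2 : g1 \in Gset -> g2 \in Gset -> GCc g1 p1 -> GCc g2 p2 ->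
  (cl p1.1 p1.2).1 = (cl p2.1 p2.2).1 -> g1.1 = g2.1 :> nat -> g1 = g2.
Proof.
move=> G1 G2 h1 h2 ev er.
move: (h1) (h2) => /andP[/andP[/eqP o1 _] _] /andP[/andP[/eqP o2 _] _].
have := Hocc_inj ev; rewrite -o1 -o2 => /(_ er) [e _].
exact: clause_uniq G1 G2 h1 h2 e.
Qed.

Lemma VG_uniq (g1 g2 : gT n) i : g1 \in Gset -> g2 \in Gset -> VGc g1 i -> VGc g2 i -> g1 = g2.
Proof.
move=> G1 G2 /andP[/andP[/eqP r1 v1] _] /andP[/andP[/eqP r2 v2] _].
by apply: (same_game G1 G2 _ v1 v2); rewrite r1 r2.
Qed.

Lemma VG_kill (g1 g2 : gT n) i p y : g1 \in Gset -> g2 \in Gset -> VGc g1 i ->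
  (y = T_pl i \/ y = F_pl i) -> plays g1 y -> GCc g2 p -> lit_pl (cl p.1 p.2) = y -> False.
Proof.
move=> G1 G2 /andP[/andP[/eqP r1 v1] _] hy py h2 ey.
have hr := GC_round h2.
move: (h2) => /andP[/andP[_ c2] l2]; rewrite ey in l2.
have lt2 := lit_lt (cl p.1 p.2).
case: (ltngtP g1.1 g2.1) => hr'.
- case: (loser_game G1 G2 hr' py v1 _ l2) => //; rewrite /var_pl; case: hy => ->; rewrite /T_pl /F_pl; lia.
- move: hr'; rewrite r1; case/andP: hr => ? _; lia.
- have e := same_game G1 G2 hr' py l2; rewrite e in v1.
  have i_lt := ltn_ord i.
  move: (three_players v1 c2 l2); case: hy => ->; rewrite /var_pl /cl_pl /T_pl /F_pl; lia.
Qed.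


Definition TG (i : 'I_n) (g : gT n) := (g \in Gset) && [exists p, GCc g p && (lit_pl (cl p.1 p.2) == T_pl i)].
Definition FG (i : 'I_n) (g : gT n) := (g \in Gset) && [exists p, GCc g p && (lit_pl (cl p.1 p.2) == F_pl i)].
Definition EF (i : 'I_n) := [exists g : gT n, FG i g].
Definition ET2 (i : 'I_n) := [exists g1 : gT n, exists g2 : gT n, [&& g1 != g2, TG i g1 & TG i g2]].
Definition asg (i : 'I_n) := ~~ EF i || ET2 i.

Lemma lit_T (l : 'I_n * bool) (i : 'I_n) : lit_pl l = T_pl i -> l = (i, true).
Proof.
case: l => j []; rewrite /lit_pl /T_pl /F_pl /= => h; last lia.
by congr pair; apply: val_inj => /=; lia.
Qed.

Lemma lit_F (l : 'I_n * bool) (i : 'I_n) : lit_pl l = F_pl i -> l = (i, false).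
Proof.
case: l => j []; rewrite /lit_pl /T_pl /F_pl /= => h; first lia.
by congr pair; apply: val_inj => /=; lia.
Qed.

Lemma TF_game (g : gT n) p q (i : 'I_n) : GCc g p -> GCc g q ->
  lit_pl (cl p.1 p.2) = T_pl i -> lit_pl (cl q.1 q.2) = F_pl i -> False.
Proof.
move=> /andP[/andP[_ c1] l1] /andP[/andP[_ _] l2] e1 e2.
rewrite e1 in l1; rewrite e2 in l2.
have := ltn_ord i.
move: (three_players c1 l1 l2); rewrite /cl_pl /T_pl /F_pl; lia.
Qed.

Lemma neq_round (g h : gT n) p q : g \in Gset -> h \in Gset -> GCc g p -> GCc h q ->
  (cl p.1 p.2).1 = (cl q.1 q.2).1 -> (g = h -> False) -> (nat_of_ord g.1 == h.1) = false.
Proof.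
move=> G H hg hh ev ne; apply/negbTE/negP => /eqP er.
exact: ne (round_eq G H hg hh ev er).
Qed.

Lemma TG_ex (i : 'I_n) (g : gT n) : TG i g -> g \in Gset /\ exists p, GCc g p /\ cl p.1 p.2 = (i, true).
Proof.
case/andP=> G /existsP[p /andP[h /eqP e]]; split => //; exists p; split => //.
exact: lit_T.
Qed.

Lemma FG_ex (i : 'I_n) (g : gT n) : FG i g -> g \in Gset /\ exists p, GCc g p /\ cl p.1 p.2 = (i, false).
Proof.
case/andP=> G /existsP[p /andP[h /eqP e]]; split => //; exists p; split => //.
exact: lit_F.
Qed.

Lemma TG_in (i : 'I_n) (g : gT n) p : g \in Gset -> GCc g p -> cl p.1 p.2 = (i, true) -> TG i g.
Proof. by move=> G h e; rewrite /TG G; apply/existsP; exists p; rewrite h e eqxx. Qed.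

Lemma FG_in (i : 'I_n) (g : gT n) p : g \in Gset -> GCc g p -> cl p.1 p.2 = (i, false) -> FG i g.
Proof. by move=> G h e; rewrite /FG G; apply/existsP; exists p; rewrite h e eqxx. Qed.

Lemma VG_unsat (g1 g2 : gT n) (i : 'I_n) p : g1 \in Gset -> g2 \in Gset -> VGc g1 i -> GCc g2 p ->
  (cl p.1 p.2).1 = i -> asg i != (cl p.1 p.2).2 -> False.
Proof.
move=> G1 G2 v1 h2 ev na.
have hy : plays g1 (T_pl i) || plays g1 (F_pl i) by case/andP: v1.
case E: (cl p.1 p.2) ev na => [j b] /= ej; subst j.
case: b E => E /= na.
- move: na; rewrite eqb_id /asg negb_or negbK => /andP[/existsP[g3 /FG_ex[G3 [p3 [h3 e3]]]] _].
  case/orP: hy => py.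
  + apply: (VG_kill G1 G2 v1 (or_introl erefl) py h2); by rewrite E.
  + apply: (VG_kill G1 G3 v1 (or_intror erefl) py h3); by rewrite e3.
- move: na; rewrite eqbF_neg negbK /asg => /orP[/negP nE|].
    by apply: nE; apply/existsP; exists g2; apply: (FG_in G2 h2 E).
  case/existsP=> g3 /existsP[g4 /and3P[_ /TG_ex[G3 [p3 [h3 e3]]] _]].
  case/orP: hy => py.
  + apply: (VG_kill G1 G3 v1 (or_introl erefl) py h3); by rewrite e3.
  + apply: (VG_kill G1 G2 v1 (or_intror erefl) py h2); by rewrite E.
Qed.

Lemma unsat_unsat (g1 g2 : gT n) (i : 'I_n) p1 p2 : g1 \in Gset -> g2 \in Gset -> GCc g1 p1 -> GCc g2 p2 ->
  (cl p1.1 p1.2).1 = i -> (cl p2.1 p2.2).1 = i ->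
  asg i != (cl p1.1 p1.2).2 -> asg i != (cl p2.1 p2.2).2 -> g1 = g2.
Proof.
move=> G1 G2 h1 h2.
case E1: (cl p1.1 p1.2) => [j1 b1]; case E2: (cl p2.1 p2.2) => [j2 b2] /= e1 e2; subst j1 j2.
case: (eqVneq g1 g2) => // ne.
case A: (asg i); case: b1 E1 => E1; case: b2 E2 => E2 //= _ _.
- (* both false; ET2 must hold *)
  have EFi : EF i by apply/existsP; exists g1; apply: (FG_in G1 h1 E1).
  move: A; rewrite /asg EFi /= => /existsP[g3 /existsP[g4 /and3P[ne34 /TG_ex[G3 [p3 [h3 e3]]] /TG_ex[G4 [p4 [h4 e4]]]]]].
  have r1 := GC_round h1; have r2 := GC_round h2; have r3 := GC_round h3; have r4 := GC_round h4.
  have d12 := neq_round G1 G2 h1 h2 (etrans (f_equal fst E1) (esym (f_equal fst E2))) (fun e => (negP ne) (introT eqP e)).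
  have d34 := neq_round G3 G4 h3 h4 (etrans (f_equal fst e3) (esym (f_equal fst e4))) (fun e => (negP ne34) (introT eqP e)).
  have tf : forall (g h : gT n) p q, GCc g p -> GCc h q -> cl p.1 p.2 = (i, true) -> cl q.1 q.2 = (i, false) -> g = h -> False.
    move=> g h p q hp hq ep eq egh; subst h.
    by apply: (TF_game hp hq); rewrite ?ep ?eq.
  have d13 := neq_round G1 G3 h1 h3 (etrans (f_equal fst E1) (esym (f_equal fst e3))) (fun e => tf _ _ _ _ h3 h1 e3 E1 (esym e)).
  have d14 := neq_round G1 G4 h1 h4 (etrans (f_equal fst E1) (esym (f_equal fst e4))) (fun e => tf _ _ _ _ h4 h1 e4 E1 (esym e)).
  have d23 := neq_round G2 G3 h2 h3 (etrans (f_equal fst E2) (esym (f_equal fst e3))) (fun e => tf _ _ _ _ h3 h2 e3 E2 (esym e)).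
  have d24 := neq_round G2 G4 h2 h4 (etrans (f_equal fst E2) (esym (f_equal fst e4))) (fun e => tf _ _ _ _ h4 h2 e4 E2 (esym e)).
  move: r1 r2 r3 r4 d12 d34 d13 d14 d23 d24.
  move: (nat_of_ord g1.1) (nat_of_ord g2.1) (nat_of_ord g3.1) (nat_of_ord g4.1) => a b c d.
  move=> r1 r2 r3 r4 /negbT/eqP ? /negbT/eqP ? /negbT/eqP ? /negbT/eqP ? /negbT/eqP ? /negbT/eqP ?; lia.
- (* both true; ET2 false *)
  move: A; rewrite /asg => /negbT; rewrite negb_or => /andP[_ /negP] nE; exfalso; apply: nE.
  apply/existsP; exists g1; apply/existsP; exists g2; rewrite ne /=.
  by rewrite (TG_in G1 h1 E1) (TG_in G2 h2 E2).
Qed.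


Definition charge (g : gT n) : option 'I_n + 'I_m :=
  if [pick i | VGc g i] is Some i then inl (Some i) else
  if [pick p | GCc g p] is Some p then
    (if asg (cl p.1 p.2).1 == (cl p.1 p.2).2 then inr p.1 else inl (Some (cl p.1 p.2).1))
  else inl None.

Lemma charge_spec (g : gT n) : g \in Gset ->
  (exists i, charge g = inl (Some i) /\ VGc g i) \/
  (exists p, charge g = inr p.1 /\ GCc g p /\ asg (cl p.1 p.2).1 = (cl p.1 p.2).2) \/
  (exists p, charge g = inl (Some (cl p.1 p.2).1) /\ GCc g p /\ asg (cl p.1 p.2).1 != (cl p.1 p.2).2).
Proof.
move=> G; rewrite /charge.
case: pickP => [i hi|nv]; first by left; exists i.
case: pickP => [p hp|nc].
  right; case: eqP => e; [left|right]; exists p; split => //; split => //.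
  exact/eqP.
exfalso; case: (Gset_cases G) => [[i hi]|[p hp]]; [by rewrite nv in hi | by rewrite nc in hp].
Qed.

Lemma charge_inj : {in Gset &, injective charge}.
Proof.
move=> g1 g2 G1 G2.
case: (charge_spec G1) => [[i1 [c1 v1]]|[[p1 [c1 [h1 s1]]]|[p1 [c1 [h1 s1]]]]];
case: (charge_spec G2) => [[i2 [c2 v2]]|[[p2 [c2 [h2 s2]]]|[p2 [c2 [h2 s2]]]]];
rewrite c1 c2 // => -[e].
- subst i2; exact: VG_uniq G1 G2 v1 v2.
- by exfalso; apply: (VG_unsat G1 G2 v1 h2 (esym e)); rewrite e.
- exact: clause_uniq G1 G2 h1 h2 e.
- by exfalso; apply: (VG_unsat G2 G1 v2 h1 e); rewrite -e.
- by apply: (unsat_unsat G1 G2 h1 h2 erefl (esym e)) => //; rewrite e.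
Qed.

Lemma main_bound : #|Gset| <= n + #|[set c | sat_clause cl asg c]|.
Proof.
set S := [set c | sat_clause cl asg c].
rewrite -(card_in_imset charge_inj).
have sub : charge @: Gset \subset (inl @: (Some @: [set: 'I_n])) :|: (inr @: S).
  apply/subsetP => x /imsetP[g G ->].
  case: (charge_spec G) => [[i [-> _]]|[[p [-> [_ sp]]]|[p [-> _]]]].
  - by rewrite inE; apply/orP; left; apply/imsetP; exists (Some i) => //; apply/imsetP; exists i.
  - rewrite inE; apply/orP; right; apply/imsetP; exists p.1 => //.
    by rewrite inE; apply/existsP; exists p.2; rewrite sp.
  - by rewrite inE; apply/orP; left; apply/imsetP; exists (Some (cl p.1 p.2).1) => //; apply/imsetP; exists (cl p.1 p.2).1.
apply: leq_trans (subset_leq_card sub) _.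
rewrite cardsU; apply: leq_trans (leq_subr _ _) _.
rewrite !card_in_imset ?cardsT ?card_ord //.
- by move=> a b _ _ [].
- by move=> a b _ _ [].
- by move=> a b _ _ [].
Qed.

End Main3.

Unset Implicit Arguments.

Theorem lemma2 (n m : nat) (cl : 'I_m -> 'I_2 -> 'I_n * bool)
    (occ : 'I_m -> 'I_2 -> nat)
    (Hthree : forall x : 'I_n, n_occ cl x <= 3)
    (Hocc_range : forall (c : 'I_m) (l : 'I_2),
        1 <= occ c l <= n_occ cl (cl c l).1)
    (Hocc_inj : forall (c c' : 'I_m) (l l' : 'I_2),
        (cl c l).1 = (cl c' l').1 -> occ c l = occ c' l' -> (c, l) = (c', l'))
    (k' : nat) :
  (exists s : {perm 'I_(2 ^ Tn' n)}, k' <= tvalue (Tphi_v cl occ) s) ->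
  exists a : 'I_n -> bool,
    k' - n <= #|[set c : 'I_m | sat_clause cl a c]|.
Proof.
move=> [s hs]; exists (asg cl occ s).
have := main_bound Hthree Hocc_range Hocc_inj s.
rewrite -(tvalue_card cl occ s) => h.
rewrite leq_subLR; exact: leq_trans hs h.
Qed.
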